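(* Let $\varphi=(\varphi_1,\varphi_2)$ be a solution of the system $(S_1^0)$ on $(0,\infty)$. (i) If $\varphi_1(r),\varphi_2(r)\to0$ as $r\to0^+$ and $\varphi_1(r),\varphi_2(r)>0$ for all sufficiently small $r>0$, then $\varphi_1(r)>0$ and $\varphi_2(r)>0$ for all $r\in(0,\infty)$. (ii) If $\varphi_1(r),\varphi_2(r)\to0$ as $r\to\infty$ and $\varphi_1(r),\varphi_2(r)>0$ for all sufficiently large $r$, then $\varphi_1(r)>0$ and $\varphi_2(r)>0$ for all $r\in(0,\infty)$.
   Context: Let $w:[0,\infty)\to\mathbb{R}$ be the unique solution of $w''+\frac1r w'-\frac1{r^2}w+(1-w^2)w=0$ on $(0,\infty)$ with $w(0)=0$ and $w(r)\to1$ as $r\to\infty$; it satisfies $0<w<1$ and $w'>0$ on $(0,\infty)$. The system $(S_1^0)$ is, for $\varphi=(\varphi_1,\varphi_2)$ real-valued, $$\varphi''+\Big(2\frac{w'}{w}+\frac1r\Big)\varphi'-\frac1{r^2}\begin{pmatrix}1&2\\2&1+2w^2r^2\end{pmatrix}\varphi=0.$$ *)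

(* Defs.v *)
From Stdlib Require Import Reals.
From Coquelicot Require Import Coquelicot.
Open Scope R_scope.

Definition is_profile (w dw ddw : R -> R) : Prop :=
  w 0 = 0 /\
  filterlim w (at_right 0) (locally 0) /\
  (forall r, 0 < r -> is_derive w r (dw r) /\ is_derive dw r (ddw r)) /\
  (forall r, 0 < r ->
     ddw r + dw r / r - w r / (r ^ 2) + (1 - (w r) ^ 2) * w r = 0) /\
  is_lim w p_infty 1.

Definition solves_S10 (w dw : R -> R)
  (p1 dp1 ddp1 p2 dp2 ddp2 : R -> R) : Prop :=
  forall r, 0 < r ->
    is_derive p1 r (dp1 r) /\ is_derive dp1 r (ddp1 r) /\
    is_derive p2 r (dp2 r) /\ is_derive dp2 r (ddp2 r) /\
    ddp1 r + (2 * dw r / w r + 1 / r) * dp1 r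
      - (1 / r ^ 2) * (1 * p1 r + 2 * p2 r) = 0 /\
    ddp2 r + (2 * dw r / w r + 1 / r) * dp2 r
      - (1 / r ^ 2) * (2 * p1 r + (1 + 2 * (w r) ^ 2 * r ^ 2) * p2 r) = 0.

(* Main.v *)
Require Import Defs.
From Stdlib Require Import Reals Lra Classical.
From Coquelicot Require Import Coquelicot.
Open Scope R_scope.
Definition Hyp (w dw p dp ddp q : R->R) r := 0 < w r /\ is_derive w r (dw r) /\
  is_derive p r (dp r) /\ is_derive dp r (ddp r) /\
  ddp r + (2*dw r/w r + 1/r)*dp r - q r = 0.

Lemma gincr (w dw p dp ddp q : R->R) a b : 0<a<b ->
 (forall r, a<=r<=b -> Hyp w dw p dp ddp q r) ->
 (forall r, a<r<b -> 0 < q r) ->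
 a * w a ^2 * dp a < b * w b^2 * dp b.
Proof.
intros Hab H Hq.
destruct (MVT_cor2 (fun r => r * w r ^2 * dp r)
  (fun r => 1 * w r ^2 * dp r + r * (INR 2 * w r ^ 1 * dw r) * dp r + r * w r^2 * ddp r) a b)
  as [c [Hc Hc2]]; [lra| |].
- intros c Hc. destruct (H c Hc) as [Hw [Hdw [Hp [Hdp _]]]].
  apply is_derive_Reals.
  auto_derive.
  + repeat split; eexists; eassumption.
  + change (fun x : R => w x) with w; change (fun x : R => dp x) with dp.
    rewrite (is_derive_unique _ _ _ Hdw), (is_derive_unique _ _ _ Hdp). simpl. ring.
- assert (Hc' : a <= c <= b) by lra.
  destruct (H c Hc') as [Hwc [_ [_ [_ He]]]].
  assert (0 < q c) by (apply Hq; lra).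
  assert (E : 1 * w c ^2 * dp c + c * (INR 2 * w c ^ 1 * dw c) * dp c + c * w c^2 * ddp c
    = c * w c ^ 2 * q c).
  { replace (q c) with (ddp c + (2*dw c/w c + 1/c)*dp c) by lra.
    simpl. field. split; lra. }
  cbv beta in Hc; rewrite E in Hc.
  assert (0 < c * w c ^2 * q c).
  { apply Rmult_lt_0_compat; [|lra]. apply Rmult_lt_0_compat; [lra|]. apply pow_lt; lra. }
  nra.
Qed.

Lemma up (w dw p dp ddp q : R->R) s r0 : 0<s<r0 -> 0 < dp s ->
 (forall r, s<=r<=r0 -> Hyp w dw p dp ddp q r) ->
 (forall r, s<r<r0 -> 0 < q r) -> p s < p r0.
Proof.
intros Hs Hd H Hq.
destruct (MVT_cor2 p dp s r0) as [c [Hc1 Hc2]]; [lra| |].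
- intros c Hc. apply is_derive_Reals. apply (H c Hc).
- assert (G := gincr w dw p dp ddp q s c (conj (proj1 Hs) (proj1 Hc2))
     (fun r Hr => H r (conj (proj1 Hr) (Rle_trans _ _ _ (proj2 Hr) (Rlt_le _ _ (proj2 Hc2)))))
     (fun r Hr => Hq r (conj (proj1 Hr) (Rlt_trans _ _ _ (proj2 Hr) (proj2 Hc2))))).
  assert (Hws : 0 < w s) by (apply (H s); lra).
  assert (Hwc : 0 < w c) by (apply (H c); lra).
  assert (0 < s * w s ^2) by (apply Rmult_lt_0_compat; [lra| apply pow_lt; lra]).
  assert (0 < c * w c ^2) by (apply Rmult_lt_0_compat; [lra| apply pow_lt; lra]).
  assert (0 < dp c) by nra.
  nra.
Qed.

Lemma down (w dw p dp ddp q : R->R) s r0 : 0<r0<s -> dp s < 0 ->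
 (forall r, r0<=r<=s -> Hyp w dw p dp ddp q r) ->
 (forall r, r0<r<s -> 0 < q r) -> p s < p r0.
Proof.
intros Hs Hd H Hq.
destruct (MVT_cor2 p dp r0 s) as [c [Hc1 Hc2]]; [lra| |].
- intros c Hc. apply is_derive_Reals. apply (H c Hc).
- assert (G := gincr w dw p dp ddp q c s (conj (Rlt_trans _ _ _ (proj1 Hs) (proj1 Hc2)) (proj2 Hc2))
     (fun r Hr => H r (conj (Rle_trans _ _ _ (Rlt_le _ _ (proj1 Hc2)) (proj1 Hr)) (proj2 Hr)))
     (fun r Hr => Hq r (conj (Rlt_trans _ _ _ (proj1 Hc2) (proj1 Hr)) (proj2 Hr)))).
  assert (Hws : 0 < w s) by (apply (H s); lra).
  assert (Hwc : 0 < w c) by (apply (H c); lra).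
  assert (0 < s * w s ^2) by (apply Rmult_lt_0_compat; [lra| apply pow_lt; lra]).
  assert (0 < c * w c ^2) by (apply Rmult_lt_0_compat; [lra| apply pow_lt; lra]).
  assert (dp c < 0) by nra.
  nra.
Qed.

Lemma der_cont (f : R -> R) (x l : R) : is_derive f x l -> continuity_pt f x.
Proof. intro H. apply derivable_continuous_pt. exists l. apply is_derive_Reals; exact H. Qed.

Lemma cont_pos f x : continuity_pt f x -> 0 < f x ->
  exists d, 0 < d /\ forall y, Rabs (y - x) < d -> 0 < f y.
Proof.
intros H Hf. unfold continuity_pt, continue_in, limit1_in, limit_in in H.
destruct (H (f x) Hf) as [a [Ha Ha2]]. exists a; split; auto.
intros y Hy. destruct (Req_dec y x) as [->|Hne]; auto.
assert (K := Ha2 y (conj (conj I (not_eq_sym Hne)) Hy)).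
simpl in K. unfold R_dist in K. apply Rabs_def2 in K. lra.
Qed.

Lemma lim0 p : filterlim p (at_right 0) (locally 0) ->
  forall e, 0 < e -> exists d, 0 < d /\ forall y, 0 < y < d -> Rabs (p y) < e.
Proof.
intros H e He. destruct (proj1 (filterlim_locally p 0) H (mkposreal e He)) as [d Hd].
exists d; split; [apply cond_pos|]. intros y Hy.
assert (K := Hd y). 
assert (B : ball 0 d y).
{ unfold ball; simpl; unfold AbsRing_ball, abs, minus, plus, opp; simpl.
  rewrite Ropp_0, Rplus_0_r, Rabs_pos_eq; lra. }
specialize (K B (proj1 Hy)).
unfold ball in K; simpl in K; unfold AbsRing_ball, abs, minus, plus, opp in K; simpl in K.
rewrite Ropp_0, Rplus_0_r in K. exact K.
Qed.

Lemma liminf p : is_lim p p_infty 0 ->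
  forall e, 0 < e -> exists M, forall y, M < y -> Rabs (p y) < e.
Proof.
intros H e He. apply is_lim_spec in H. destruct (H (mkposreal e He)) as [M HM].
exists M. intros y Hy. specialize (HM y Hy). simpl in HM. rewrite Rminus_0_r in HM. exact HM.
Qed.

Lemma finish1 (w dw p dp ddp q : R -> R) r0 : 0 < r0 -> p r0 <= 0 ->
  (forall x, 0<x<r0 -> 0 < p x /\ 0 < q x) ->
  (forall x, 0<x -> Hyp w dw p dp ddp q x) ->
  filterlim p (at_right 0) (locally 0) -> False.
Proof.
intros Hr0 Hp0 Hpos HH L.
set (t := r0/2). assert (Htp : 0 < t < r0) by (unfold t; lra).
assert (Ht : 0 < p t) by (apply Hpos; unfold t; lra).
destruct (lim0 p L (p t) Ht) as [d [Hd Hd2]].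
set (a := Rmin (t/2) (d/2)).
assert (Ha : 0 < a < t).
{ unfold a. split. apply Rmin_glb_lt; lra. apply Rle_lt_trans with (t/2). apply Rmin_l. unfold t; lra. }
assert (Hpa : p a < p t).
{ assert (K : Rabs (p a) < p t). apply Hd2. split. lra.
  apply Rle_lt_trans with (d/2). apply Rmin_r. lra.
  apply Rabs_def2 in K. lra. }
destruct (MVT_cor2 p dp a t) as [c [Hc1 Hc2]]; [lra| |].
- intros c Hc. apply is_derive_Reals. apply (HH c). lra.
- assert (Hdc : 0 < dp c) by nra.
  assert (Hc : 0 < c < r0) by (unfold t in *; lra).
  assert (U := up w dw p dp ddp q c r0 Hc Hdc
           (fun r Hr => HH r ltac:(lra)) (fun r Hr => proj2 (Hpos r ltac:(lra)))).
  assert (0 < p c) by (apply Hpos; lra). lra.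
Qed.

Lemma finish2 (w dw p dp ddp q : R -> R) r0 : 0 < r0 -> p r0 <= 0 ->
  (forall x, r0<x -> 0 < p x /\ 0 < q x) ->
  (forall x, 0<x -> Hyp w dw p dp ddp q x) ->
  is_lim p p_infty 0 -> False.
Proof.
intros Hr0 Hp0 Hpos HH L.
set (t := r0+1). assert (Htp : r0 < t) by (unfold t; lra).
assert (Ht : 0 < p t) by (apply Hpos; unfold t; lra).
destruct (liminf p L (p t) Ht) as [M HM].
set (a := Rmax (t+1) (M+1)).
assert (Ha : t < a) by (unfold a; apply Rlt_le_trans with (t+1); [lra|apply Rmax_l]).
assert (Hpa : p a < p t).
{ assert (K : Rabs (p a) < p t). apply HM.
  apply Rlt_le_trans with (M+1). lra. apply Rmax_r.
  apply Rabs_def2 in K. lra. }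
destruct (MVT_cor2 p dp t a) as [c [Hc1 Hc2]]; [lra| |].
- intros c Hc. apply is_derive_Reals. apply (HH c). unfold t in *; lra.
- assert (Hdc : dp c < 0) by nra.
  assert (Hc : 0 < r0 < c) by (unfold t in *; lra).
  assert (U := down w dw p dp ddp q c r0 Hc Hdc
           (fun r Hr => HH r ltac:(lra)) (fun r Hr => proj2 (Hpos r ltac:(lra)))).
  assert (0 < p c) by (apply Hpos; lra). lra.
Qed.

Theorem lemma3p7 (w dw ddw : R -> R)
  (Hw : is_profile w dw ddw)
  (Hwpos : forall r, 0 < r -> 0 < w r < 1)
  (Hdwpos : forall r, 0 < r -> 0 < dw r)
  (p1 dp1 ddp1 p2 dp2 ddp2 : R -> R)
  (Hsol : solves_S10 w dw p1 dp1 ddp1 p2 dp2 ddp2) :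
  ((filterlim p1 (at_right 0) (locally 0) /\
    filterlim p2 (at_right 0) (locally 0) /\
    (exists d, 0 < d /\ forall r, 0 < r < d -> 0 < p1 r /\ 0 < p2 r)) ->
   forall r, 0 < r -> 0 < p1 r /\ 0 < p2 r) /\
  ((is_lim p1 p_infty 0 /\ is_lim p2 p_infty 0 /\
    (exists M, forall r, M < r -> 0 < p1 r /\ 0 < p2 r)) ->
   forall r, 0 < r -> 0 < p1 r /\ 0 < p2 r).
Proof.
set (q1 := fun r => 1 / r ^ 2 * (1 * p1 r + 2 * p2 r)).
set (q2 := fun r => 1 / r ^ 2 * (2 * p1 r + (1 + 2 * (w r) ^ 2 * r ^ 2) * p2 r)).
assert (HH : forall r, 0 < r -> Hyp w dw p1 dp1 ddp1 q1 r /\ Hyp w dw p2 dp2 ddp2 q2 r).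
{ intros r Hr. destruct Hw as [_ [_ [Hd _]]].
  destruct (Hd r Hr) as [Hd1 _].
  destruct (Hsol r Hr) as [A [B [C [D [E F]]]]].
  assert (0 < w r) by (apply Hwpos; auto).
  unfold Hyp, q1, q2. split; (split; [auto|split; [auto|split; [auto|split; auto]]]). }
assert (HH1 : forall r, 0 < r -> Hyp w dw p1 dp1 ddp1 q1 r) by (intros; apply HH; auto).
assert (HH2 : forall r, 0 < r -> Hyp w dw p2 dp2 ddp2 q2 r) by (intros; apply HH; auto).
assert (Hq : forall r, 0 < r -> 0 < p1 r -> 0 < p2 r -> 0 < q1 r /\ 0 < q2 r).
{ intros r Hr H1 H2. assert (0 < 1 / r ^ 2) by (apply Rdiv_lt_0_compat; [lra| apply pow_lt; lra]).
  unfold q1, q2; split; apply Rmult_lt_0_compat; auto; try lra.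
  assert (0 <= 2 * w r ^ 2 * r ^ 2).
  { apply Rmult_le_pos. apply Rmult_le_pos. lra. apply pow2_ge_0. apply pow2_ge_0. }
  nra. }
split.
- intros [L1 [L2 [d [Hd Hp]]]] r Hr.
  destruct (classic (0 < p1 r /\ 0 < p2 r)) as [OK|NO]; [exact OK|exfalso].
  set (E := fun x => 0 < x /\ ~ (0 < p1 x /\ 0 < p2 x)).
  set (E' := fun x => E (- x)).
  assert (Bd : is_upper_bound E' (- d)).
  { intros x [Hx Hx2]. destruct (Rle_dec x (-d)); auto. exfalso; apply Hx2, Hp; lra. }
  assert (Ene : E' (-r)) by (unfold E', E; cbv beta; rewrite Ropp_involutive; split; auto).
  destruct (completeness E' (ex_intro _ (-d) Bd) (ex_intro _ (-r) Ene))
    as [m [Hm1 Hm2]].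
  assert (F1 : m <= -d) by (apply Hm2; exact Bd).
  assert (F2 : forall x, 0 < x < -m -> 0 < p1 x /\ 0 < p2 x).
  { intros x Hx. destruct (classic (0 < p1 x /\ 0 < p2 x)) as [OK|NO2]; auto.
    exfalso. assert (K : E' (-x)) by (unfold E', E; cbv beta; rewrite Ropp_involutive; split; [lra|auto]).
    apply Hm1 in K. lra. }
  assert (F3 : ~ (0 < p1 (-m) /\ 0 < p2 (-m))).
  { intros [P1 P2].
    destruct (cont_pos p1 (-m) (der_cont _ _ _ (proj1 (proj2 (proj2 (HH1 (-m) ltac:(lra)))))) P1) as [d1 [Hd1 K1]].
    destruct (cont_pos p2 (-m) (der_cont _ _ _ (proj1 (proj2 (proj2 (HH2 (-m) ltac:(lra)))))) P2) as [d2 [Hd2 K2]].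
    set (de := Rmin d1 d2).
    assert (Hde : 0 < de /\ de <= d1 /\ de <= d2) by (unfold de; split; [apply Rmin_glb_lt; lra|split; [apply Rmin_l|apply Rmin_r]]).
    assert (Ub : is_upper_bound E' (m - de)).
    { intros x Ex. assert (x <= m) by (apply Hm1; exact Ex).
      destruct (Rle_dec x (m - de)); auto. exfalso. destruct Ex as [Ex1 Ex2]. apply Ex2. split.
      - apply K1. apply Rabs_def1; lra.
      - apply K2. apply Rabs_def1; lra. }
    apply Hm2 in Ub. lra. }
  assert (Hr0 : 0 < - m) by lra.
  destruct (Rle_dec (p1 (-m)) 0) as [N1|N1].
  + apply (finish1 w dw p1 dp1 ddp1 q1 (-m) Hr0 N1); auto.
    intros x Hx. destruct (F2 x Hx). split; auto. apply Hq; lra.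
  + assert (N2 : p2 (-m) <= 0) by (destruct (Rle_dec (p2 (-m)) 0); auto; exfalso; apply F3; lra).
    apply (finish1 w dw p2 dp2 ddp2 q2 (-m) Hr0 N2); auto.
    intros x Hx. destruct (F2 x Hx). split; auto. apply Hq; lra.
- intros [L1 [L2 [M Hp]]] r Hr.
  destruct (classic (0 < p1 r /\ 0 < p2 r)) as [OK|NO]; [exact OK|exfalso].
  set (E := fun x => 0 < x /\ ~ (0 < p1 x /\ 0 < p2 x)).
  assert (Bd : is_upper_bound E M).
  { intros x [Hx Hx2]. destruct (Rle_dec x M); auto. exfalso; apply Hx2, Hp; lra. }
  destruct (completeness E (ex_intro _ M Bd) (ex_intro _ r (conj Hr NO)))
    as [m [Hm1 Hm2]].
  assert (F1 : r <= m) by (apply Hm1; split; auto).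
  assert (F2 : forall x, m < x -> 0 < p1 x /\ 0 < p2 x).
  { intros x Hx. destruct (classic (0 < p1 x /\ 0 < p2 x)) as [OK|NO2]; auto.
    exfalso. assert (K : E x) by (split; [lra|auto]).
    apply Hm1 in K. lra. }
  assert (F3 : ~ (0 < p1 m /\ 0 < p2 m)).
  { intros [P1 P2].
    destruct (cont_pos p1 m (der_cont _ _ _ (proj1 (proj2 (proj2 (HH1 m ltac:(lra)))))) P1) as [d1 [Hd1 K1]].
    destruct (cont_pos p2 m (der_cont _ _ _ (proj1 (proj2 (proj2 (HH2 m ltac:(lra)))))) P2) as [d2 [Hd2 K2]].
    set (de := Rmin d1 d2).
    assert (Hde : 0 < de /\ de <= d1 /\ de <= d2) by (unfold de; split; [apply Rmin_glb_lt; lra|split; [apply Rmin_l|apply Rmin_r]]).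
    assert (Ub : is_upper_bound E (m - de)).
    { intros x Ex. assert (x <= m) by (apply Hm1; exact Ex).
      destruct (Rle_dec x (m - de)); auto. exfalso. destruct Ex as [Ex1 Ex2]. apply Ex2. split.
      - apply K1. apply Rabs_def1; lra.
      - apply K2. apply Rabs_def1; lra. }
    apply Hm2 in Ub. lra. }
  assert (Hr0 : 0 < m) by lra.
  destruct (Rle_dec (p1 m) 0) as [N1|N1].
  + apply (finish2 w dw p1 dp1 ddp1 q1 m Hr0 N1); auto.
    intros x Hx. destruct (F2 x Hx). split; auto. apply Hq; lra.
  + assert (N2 : p2 m <= 0) by (destruct (Rle_dec (p2 m) 0); auto; exfalso; apply F3; lra).
    apply (finish2 w dw p2 dp2 ddp2 q2 m Hr0 N2); auto.
    intros x Hx. destruct (F2 x Hx). split; auto. apply Hq; lra.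
Qed.
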